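(* Let $(\eta_k)_{k\in\mathbb{N}}$ be independent identically distributed random variables with values in $\mathbb{N}$, $P(\eta_k=m)=p_m$ ($p_m\ge0$, $\sum_m p_m=1$), and let $$\eta=\sum_{k=1}^\infty\frac{(-1)^{k-1}}{\eta_1(\eta_1+\eta_2)\cdots(\eta_1+\eta_2+\dots+\eta_k)}.$$ Then the distribution $\mu_\eta$ of $\eta$ is invariant and ergodic with respect to the shift $T$.
   Context: Every irrational $x\in(0,1)$ has a unique representation ($\bar O^1$-expansion) $$x=\sum_{k=1}^\infty\frac{(-1)^{k-1}}{g_1(g_1+g_2)\cdots(g_1+g_2+\dots+g_k)}=:\bar O^1(g_1,g_2,\dots),\qquad g_k\in\mathbb{N},$$ and every infinite sequence of positive integers yields an irrational number in $(0,1)$ this way; so $\eta=\bar O^1(\eta_1,\eta_2,\dots)$. The shift $T$ is defined on irrationals of $(0,1)$ by $T(\bar O^1(g_1,g_2,g_3,\dots))=\bar O^1(g_2,g_3,\dots)$. A measure $\mu$ is $T$-invariant if $\mu(T^{-1}E)=\mu(E)$ for every Borel set $E$; it is $T$-ergodic if every Borel set $A$ with $T^{-1}A=A$ has $\mu(A)\in\{0,1\}$. *)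

(* Defs.v *)
From HB Require Import structures.
From mathcomp Require Import all_boot all_order all_algebra.
From mathcomp Require Import all_classical all_reals all_analysis.
Set Implicit Arguments. Unset Strict Implicit. Unset Printing Implicit Defensive.
Import Order.TTheory GRing.Theory Num.Theory.
Import numFieldNormedType.Exports.
Local Open Scope classical_set_scope.
Local Open Scope ring_scope.

(* Sequences g_1, g_2, ... are encoded as g : nat -> nat with g 0 = g_1. *)

Definition O1_term (R : realType) (g : nat -> nat) (k : nat) : R :=
  (-1) ^+ k / \prod_(j < k.+1) ((\sum_(i < j.+1) g i)%N)%:R.

Definition O1 (R : realType) (g : nat -> nat) : R :=
  limn (series (O1_term R g)).

(* the domain of T: numbers having an O-bar^1 expansion with positive digits
   (= the irrationals of (0,1)) *)
Definition O1_dom (R : realType) (x : R) : Prop :=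
  exists g : nat -> nat, (forall k, (0 < g k)%N) /\ O1 R g = x.

(* The shift T(O1(g_1,g_2,...)) = O1(g_2,g_3,...); outside its domain we
   extend it by the identity. *)
Definition O1_shift (R : realType) (x : R) : R :=
  match pselect (O1_dom x) with
  | left h => O1 R (fun k => (projT1 (cid h)) k.+1)
  | right _ => x
  end.

Definition distr_of d (Omega : measurableType d) (R : realType)
  (P : probability Omega R) (f : Omega -> R) : set R -> \bar R :=
  fun A => P (f @^-1` A).

Definition mutually_independent d (Omega : measurableType d) (R : realType)
  (P : probability Omega R) (X : nat -> Omega -> nat) : Prop :=
  forall (s : seq nat) (A : nat -> set nat), uniq s ->
    P (\bigcap_(i in [set` s]) (X i @^-1` A i)) =
    (\prod_(i <- s) P (X i @^-1` A i))%E.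

Definition T_invariant (R : realType) (T : R -> R) (mu : set R -> \bar R) :=
  forall E : set R, measurable E -> mu (T @^-1` E) = mu E.

Definition T_ergodic (R : realType) (T : R -> R) (mu : set R -> \bar R) :=
  forall A : set R, measurable A -> T @^-1` A = A ->
    mu A = 0%E \/ mu A = 1%E.

(* Main.v *)
Require Import Defs.
From HB Require Import structures.
From mathcomp Require Import all_boot all_order all_algebra.
From mathcomp Require Import all_classical all_reals all_analysis.
From mathcomp Require Import ring lra zify.
From mathcomp Require Import measurable_realfun.
Import Order.TTheory GRing.Theory Num.Theory.
Import numFieldNormedType.Exports.
Local Open Scope classical_set_scope.
Local Open Scope ring_scope.
Section O1facts.
Variable R : realType.
Definition sg (g : nat -> nat) j := (\sum_(i < j.+1) g i)%N.
Definition Pp (g : nat -> nat) k : R := \prod_(j < k.+1) (sg g j)%:R.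
Definition posg (g : nat -> nat) := forall k, (0 < g k)%N.

Lemma sg0 g : sg g 0 = g 0. Proof. by rewrite /sg big_ord_recr big_ord0. Qed.
Lemma sgS g j : sg g j.+1 = (sg g j + g j.+1)%N.
Proof. by rewrite /sg big_ord_recr. Qed.
Lemma sg_ge g j : posg g -> (j.+1 <= sg g j)%N.
Proof.
move=> pg; elim: j => [|j IH]; first by rewrite sg0 pg.
by rewrite sgS; have := pg j.+1; lia.
Qed.
Lemma Pp0 g : Pp g 0 = (g 0)%:R.
Proof. by rewrite /Pp big_ord1 sg0. Qed.
Lemma PpS g k : Pp g k.+1 = Pp g k * (sg g k.+1)%:R.
Proof. by rewrite /Pp big_ord_recr. Qed.
Lemma Pp_gt0 g k : posg g -> 0 < Pp g k.
Proof.
move=> pg; elim: k => [|k IH]; first by rewrite Pp0 ltr0n pg.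
rewrite PpS mulr_gt0 // ltr0n; have := sg_ge _ k.+1 pg; lia.
Qed.
Lemma Pp_ge2 g k : posg g -> 2 ^+ k <= Pp g k.
Proof.
move=> pg; elim: k => [|k IH]; first by rewrite Pp0 expr0 ler1n pg.
rewrite PpS exprSr; apply: ler_pM => //.
rewrite ler_nat; have := sg_ge _ k.+1 pg; lia.
Qed.
Lemma Pp_lt g k : posg g -> Pp g k < Pp g k.+1.
Proof.
move=> pg; rewrite PpS -[X in X < _]mulr1 ltr_pM2l ?Pp_gt0 // ltr1n.
have := sg_ge _ k.+1 pg; lia.
Qed.
Lemma Pp_ltV g k : posg g -> (Pp g k.+1)^-1 < (Pp g k)^-1.
Proof.
move=> pg; rewrite ltf_pV2 ?posrE ?Pp_gt0 //; exact: Pp_lt.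
Qed.

Lemma termE g k : O1_term R g k = (-1) ^+ k * (Pp g k)^-1.
Proof. by []. Qed.

Lemma O1_cvg g : posg g -> cvgn (series (O1_term R g)).
Proof.
move=> pg; apply: normed_cvg.
apply: (@series_le_cvg _ _ (geometric 1 (2^-1))).
- by move=> n /=; rewrite normr_ge0.
- by move=> n; rewrite /geometric /= mul1r exprn_ge0 // invr_ge0.
- move=> n; rewrite /geometric /= mul1r termE normrM normrX normrN normr1 expr1n mul1r.
  rewrite normfV ger0_norm; last exact/ltW/Pp_gt0.
  rewrite exprVn lef_pV2 ?posrE ?Pp_gt0 ?exprn_gt0 //; exact: Pp_ge2.
- by apply: is_cvg_geometric_series; rewrite ger0_norm ?invr_ge0 // invf_lt1 // ltr1n.
Qed.

Lemma alt_bound N (b : nat -> R) : (forall j, 0 <= b j) -> (forall j, b j.+1 <= b j) ->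
  0 <= \sum_(j < N) (-1) ^+ j * b j <= b 0%N.
Proof.
elim: N b => [|N IH] b b0 bd; first by rewrite big_ord0 lexx b0.
rewrite big_ord_recl expr0 mul1r.
under eq_bigr => j _ do rewrite /bump /= exprS mulN1r mulNr.
rewrite sumrN.
have /andP[h1 h2] := IH (fun j => b j.+1) (fun j => b0 j.+1) (fun j => bd j.+1).
have := bd 0%N; move: h1 h2 => /=.
set A := \sum_(_ < _) _; move=> h1 h2 h3; apply/andP; split; lra.
Qed.
Notation S g := (series (O1_term R g)).

Lemma series_split g m n : (m <= n)%N ->
  S g n = S g m + \sum_(j < n - m) O1_term R g (m + j).
Proof.
move=> mn; rewrite /series /= (big_cat_nat (leq0n m) mn) /=; congr (_ + _).
by rewrite -{1}(add0n m) big_addn big_mkord; apply: eq_bigr => j _; rewrite addnC.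
Qed.

Lemma even_bracket g m n : posg g -> ~~ odd m -> (m <= n)%N ->
  S g m <= S g n <= S g m + (Pp g m)^-1.
Proof.
move=> pg em mn; rewrite (series_split g _ _ mn).
have -> : \sum_(j < n - m) O1_term R g (m + j) =
          \sum_(j < n - m) (-1) ^+ j * (Pp g (m + j))^-1.
  apply: eq_bigr => j _; rewrite termE exprD -signr_odd (negbTE em) expr0 mul1r.
  by [].
have := @alt_bound (n - m) (fun j => (Pp g (m + j))^-1).
rewrite addn0 => /(_ _ _)/andP[].
- by move=> j; rewrite invr_ge0 ltW // Pp_gt0.
- by move=> j; rewrite addnS ltW // Pp_ltV.
move=> h1 h2; apply/andP; split; lra.
Qed.

Lemma O1_ge g m : posg g -> ~~ odd m -> S g m <= O1 R g.
Proof.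
move=> pg em; apply: limr_ge; first exact: O1_cvg.
near=> n; have : (m <= n)%N by near: n; exists m.
by move=> /(even_bracket _ _ _ pg em)/andP[].
Unshelve. all: by end_near. Qed.

Lemma O1_le g m : posg g -> ~~ odd m -> O1 R g <= S g m + (Pp g m)^-1.
Proof.
move=> pg em; apply: limr_le; first exact: O1_cvg.
near=> n; have : (m <= n)%N by near: n; exists m.
by move=> /(even_bracket _ _ _ pg em)/andP[].
Unshelve. all: by end_near. Qed.
Lemma SS g n : S g n.+1 = S g n + O1_term R g n.
Proof. by rewrite /series /= big_nat_recr. Qed.
Lemma S0 g : S g 0 = 0.
Proof. by rewrite /series /= big_geq. Qed.

Lemma O1_upper g : posg g -> O1 R g <= ((g 0)%:R)^-1.
Proof.
move=> pg; have := @O1_le g 0 pg isT; by rewrite S0 add0r Pp0.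
Qed.

Lemma O1_lower g : posg g -> ((g 0)%:R + 1)^-1 < O1 R g.
Proof.
move=> pg; apply: (lt_le_trans _ (@O1_ge g 4 pg isT)).
rewrite !SS S0 add0r !termE /= expr0 expr1 !mul1r !mulN1r.
have h23 := @Pp_ltV g 2 pg.
have h01 : ((g 0)%:R + 1)^-1 <= (Pp g 0)^-1 - (Pp g 1)^-1.
  rewrite PpS Pp0 sgS sg0 natrD.
  have a1 : 1 <= (g 0)%:R :> R by rewrite ler1n pg.
  have b1 : 1 <= (g 1)%:R :> R by rewrite ler1n pg.
  set a := (g 0)%:R in a1 *; set b := (g 1)%:R in b1 *.
  have -> : (a + 1)^-1 = a^-1 - (a * (a + 1))^-1.
    by field; apply/andP; split; apply/negP => /eqP; lra.
  rewrite lerD2l lerN2 lef_pV2 ?posrE ?mulr_gt0 //; try lra.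
  by rewrite ler_pM2l; lra.
rewrite !exprS expr0 mulr1 mulN1r opprK mulN1r mul1r.
lra.
Qed.
Definition merge (g : nat -> nat) : nat -> nat :=
  fun k => if k is k'.+1 then g k'.+2 else (g 0 + g 1)%N.
Lemma merge_pos g : posg g -> posg (merge g).
Proof. by move=> pg [|k] /=; rewrite ?addn_gt0 ?pg. Qed.
Lemma sg_merge g j : sg (merge g) j = sg g j.+1.
Proof. elim: j => [|j IH]; first by rewrite !sg0 sgS sg0. by rewrite sgS IH (sgS g j.+1). Qed.
Lemma Pp_merge g k : Pp g k.+1 = (g 0)%:R * Pp (merge g) k.
Proof.
rewrite /Pp big_ord_recl sg0; congr (_ * _); apply: eq_bigr => j _.
by rewrite sg_merge.
Qed.
Lemma term_merge g k : posg g ->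
  O1_term R g k.+1 = - ((g 0)%:R)^-1 * O1_term R (merge g) k.
Proof.
move=> pg; rewrite !termE Pp_merge invfM exprS; ring.
Qed.
Lemma S_merge g n : posg g ->
  S g n.+1 = ((g 0)%:R)^-1 - ((g 0)%:R)^-1 * S (merge g) n.
Proof.
move=> pg; elim: n => [|n IH].
  by rewrite SS !S0 termE expr0 mul1r Pp0; ring.
by rewrite SS IH term_merge // (SS (merge g)); ring.
Qed.
Lemma O1_merge g : posg g ->
  O1 R g = ((g 0)%:R)^-1 - ((g 0)%:R)^-1 * O1 R (merge g).
Proof.
move=> pg.
have c1 : S g n.+1 @[n --> \oo] --> O1 R g.
  by rewrite cvg_shiftS; exact: O1_cvg.
have c2 : (((g 0)%:R)^-1 - ((g 0)%:R)^-1 * S (merge g) n) @[n --> \oo] -->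
    ((g 0)%:R)^-1 - ((g 0)%:R)^-1 * O1 R (merge g).
  apply: cvgB; first exact: cvg_cst.
  by apply: cvgMl_tmp; apply: O1_cvg; apply: merge_pos.
have e : (fun n => S g n.+1) =
   (fun n => ((g 0)%:R)^-1 - ((g 0)%:R)^-1 * S (merge g) n).
  by apply/funext => n; rewrite S_merge.
rewrite e in c1; exact: (cvg_unique _ c1 c2).
Qed.

Lemma O1_inj_n n : forall g h, posg g -> posg h -> O1 R g = O1 R h -> g n = h n.
Proof.
have base : forall g h, posg g -> posg h -> O1 R g = O1 R h -> g 0 = h 0.
  move=> g h pg ph e.
  have L1 := O1_lower _ pg; have U1 := O1_upper _ pg.
  have L2 := O1_lower _ ph; have U2 := O1_upper _ ph.
  have [gh|hg|//] := ltngtP (g 0) (h 0).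
  - have : ((h 0)%:R)^-1 <= ((g 0)%:R + 1)^-1 :> R.
      have g0 : 0 < (g 0)%:R :> R by rewrite ltr0n pg.
      have h0 : 0 < (h 0)%:R :> R by rewrite ltr0n ph.
      rewrite lef_pV2 ?posrE ?addr_gt0 // natr1 ler_nat //.
    move=> H; rewrite -e in U2; exfalso; lra.
  - have : ((g 0)%:R)^-1 <= ((h 0)%:R + 1)^-1 :> R.
      have g0 : 0 < (g 0)%:R :> R by rewrite ltr0n pg.
      have h0 : 0 < (h 0)%:R :> R by rewrite ltr0n ph.
      rewrite lef_pV2 ?posrE ?addr_gt0 // natr1 ler_nat //.
    move=> H; rewrite e in U1; exfalso; lra.
elim: n => [|n IH] g h pg ph e; first exact: base.
have e0 := base g h pg ph e.
have em : O1 R (merge g) = O1 R (merge h).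
  move: e; rewrite (O1_merge _ pg) (O1_merge _ ph) e0.
  have : ((h 0)%:R)^-1 != 0 :> R by rewrite invr_eq0 pnatr_eq0 -lt0n ph.
  move=> nz /(congr1 (fun x => ((h 0)%:R)^-1 - x)).
  by rewrite !subKr => /(mulfI nz).
have := IH _ _ (merge_pos _ pg) (merge_pos _ ph) em.
case: n IH => [|n] IH /=; last by [].
by rewrite e0 => /addnI.
Qed.

Lemma O1_inj g h : posg g -> posg h -> O1 R g = O1 R h -> g = h.
Proof. by move=> pg ph e; apply/funext => n; exact: O1_inj_n. Qed.

Lemma O1_shiftE g : posg g -> O1_shift (O1 R g) = O1 R (fun k => g k.+1).
Proof.
move=> pg; rewrite /O1_shift; case: pselect => [h|nh]; last first.
  by exfalso; apply: nh; exists g.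
case: cid => g' [pg' e] /=.
by rewrite (O1_inj _ _ pg' pg e).
Qed.
End O1facts.
Section Indep.
Local Open Scope ereal_scope.
Context (R : realType) (d : measure_display) (Omega : measurableType d)
  (P : probability Omega R).

Lemma Pfin (A : set Omega) : measurable A -> P A = (fine (P A))%:E.
Proof. by move=> mA; rewrite fineK // fin_num_measure. Qed.

Lemma indepC (Y Z : set Omega) : measurable Y -> measurable Z ->
  P (Y `&` Z) = P Y * P Z -> P (~` Y `&` Z) = P (~` Y) * P Z.
Proof.
move=> mY mZ h.
rewrite setIC -setDE measureD //; last by rewrite ltey_eq fin_num_measure.
change (P Z - P (Z `&` Y) = P (~` Y) * P Z).
rewrite probability_setC // setIC.
move: h; rewrite (Pfin _ mY) (Pfin _ mZ) (Pfin _ (measurableI Y Z mY mZ)).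
set a := fine (P Y); set b := fine (P Z); set c := fine (P (Y `&` Z)).
rewrite -EFinM; case=> hc.
by rewrite -EFinB -EFinB -EFinM hc mulrBl mul1r.
Qed.

Lemma trivI_setI (F : nat -> set Omega) Z : trivIset setT F ->
  trivIset setT (fun n => F n `&` Z).
Proof.
by move=> h i j Hi Hj [w [[a _] [b _]]]; apply: h => //; exists w.
Qed.

Lemma indepU (F : nat -> set Omega) (Z : set Omega) :
  (forall n, measurable (F n)) -> measurable Z -> trivIset setT F ->
  (forall n, P (F n `&` Z) = P (F n) * P Z) ->
  P (\bigcup_n F n `&` Z) = P (\bigcup_n F n) * P Z.
Proof.
move=> mF mZ tF h.
have mFZ : forall i, setT i -> measurable (F i `&` Z).
  by move=> i Hi; apply: measurableI.
rewrite setI_bigcupl (measure_bigcup P _ _ mFZ (trivI_setI F Z tF)).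
have mF' : forall i, setT i -> measurable (F i) by move=> i Hi.
rewrite (measure_bigcup P _ _ mF' tF).
transitivity (\sum_(i <oo | i \in [set: nat]) ((fine (P Z))%:E * P (F i))).
  apply: eq_eseriesr => i _; rewrite muleC -(Pfin _ mZ); exact: h.
rewrite nneseriesZl; last by move=> i _; exact: measure_ge0.
by rewrite muleC -(Pfin _ mZ).
Qed.
End Indep.

Definition cyl (n : nat) (A : nat -> set nat) : set (nat -> nat) :=
  [set g | forall i, (i < n)%N -> A i (g i)].
Definition Gc : set (set (nat -> nat)) := [set C | exists n A, C = cyl n A].
Definition Seq := g_sigma_algebraType Gc.

Lemma cyl_meas n A : measurable (cyl n A : set Seq).
Proof. by apply: sub_sigma_algebra; exists n, A. Qed.

Lemma Gc_setI : setI_closed Gc.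
Proof.
move=> _ _ [n [A ->]] [m [B ->]].
exists (maxn n m), (fun i => (if (i < n)%N then A i else setT) `&`
                            (if (i < m)%N then B i else setT)).
apply/seteqP; split => g /=.
- move=> [hA hB] i _; split; case: ifP => // h; [exact: hA|exact: hB].
- move=> h; split => i hi.
  + have := h i; rewrite hi; case=> //; lia.
  + have := h i; rewrite hi; case=> //; lia.
Qed.

Lemma seq_dynkin (Q : set (set Seq)) : Q setT -> (forall n A, Q (cyl n A)) ->
  (forall B, measurable B -> Q B -> Q (~` B)) ->
  (forall F : (set Seq)^nat, (forall n, measurable (F n)) -> trivIset setT F ->
     (forall n, Q (F n)) -> Q (\bigcup_k F k)) ->
  forall B, measurable B -> Q B.
Proof.
move=> QT Qc QC QU B mB.
apply: (@dynkin_induction _ Seq Gc Q) => //.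
- exact: Gc_setI.
- by move=> _ [n [A ->]].
Qed.

Lemma fin_dep_meas (R : realType) (f : Seq -> R) n :
  (forall g g', (forall i, (i < n)%N -> g i = g' i) -> f g = f g') ->
  measurable_fun setT f.
Proof.
move=> fd _ E mE; rewrite setTI.
pose ext (s : seq nat) : nat -> nat := fun i => nth 0%N s i.
pose C (j : nat) : set Seq := match unpickle j with
  | Some s => if `[< E (f (ext s)) >] then cyl n (fun i => [set nth 0%N s i])
              else set0
  | None => set0 end.
have -> : f @^-1` E = \bigcup_j C j.
  apply/seteqP; split => g /=.
  - move=> Eg; exists (pickle (mkseq g n)) => //.
    rewrite /C pickleK.
    have fe : f (ext (mkseq g n)) = f g.
      by apply: fd => i hi; rewrite /ext nth_mkseq.
    rewrite fe; case: asboolP => // _ i hi /=; by rewrite nth_mkseq.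
  - move=> [j _]; rewrite /C; case: unpickle => // s.
    case: asboolP => // Es hg.
    have -> : f g = f (ext s) by apply: fd => i hi; exact: hg.
    exact: Es.
apply: bigcupT_measurable => j; rewrite /C; case: unpickle => // s.
case: asboolP => // _; exact: cyl_meas.
Qed.

Definition posf (g : nat -> nat) : nat -> nat := fun k => maxn 1 (g k).
Definition Fp (R : realType) (g : Seq) : R := O1 R (posf g).

Lemma posf_pos g : posg (posf g).
Proof. by move=> k; rewrite /posf leq_max. Qed.

Lemma term_dep (R : realType) g g' k : (forall i, (i <= k)%N -> g i = g' i) ->
  O1_term R g k = O1_term R g' k.
Proof.
move=> H; rewrite /O1_term; congr (_ / _); apply: eq_bigr => j _.
congr (_%:R); apply: eq_bigr => i _; apply: H.
have := ltn_ord i; have := ltn_ord j; lia.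
Qed.

Lemma Fp_meas (R : realType) : measurable_fun setT (@Fp R).
Proof.
apply: (@measurable_fun_cvg _ _ _ setT
          (fun m (g : Seq) => series (O1_term R (posf g)) m)).
- move=> m; apply: (@fin_dep_meas R _ m) => g g' H.
  rewrite /series /=; apply: eq_big_nat => k /andP[_ hk].
  apply: term_dep => i hi; rewrite /posf H //; lia.
- by move=> g _; exact: (O1_cvg R _ (posf_pos g)).
Qed.

Lemma Fp_shift (R : realType) g : O1_shift (@Fp R g) = Fp R (fun k => g k.+1).
Proof. exact: (O1_shiftE R _ (posf_pos g)). Qed.

Section Main.
Context (R : realType) (d : measure_display) (Omega : measurableType d)
  (P : probability Omega R) (X : nat -> Omega -> nat) (p : nat -> R).
Hypothesis mX : forall k m, measurable (X k @^-1` [set m]).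
Hypothesis pX : forall k m, P (X k @^-1` [set m]) = (p m)%:E.
Hypothesis indep : mutually_independent P X.
Hypothesis Xpos : forall k w, (0 < X k w)%N.

Definition Phi k (w : Omega) : Seq := fun i => X (i + k)%N w.

Lemma preA k A : X k @^-1` A = \bigcup_(m in A) X k @^-1` [set m].
Proof.
apply/seteqP; split => w /=; first by move=> h; exists (X k w).
by move=> [m Am ->].
Qed.

Lemma mXA k A : measurable (X k @^-1` A).
Proof. by rewrite preA; apply: bigcup_measurable => m _. Qed.

Lemma PXA k A : P (X k @^-1` A) = P (X 0 @^-1` A).
Proof.
have t j : trivIset A (fun m => X j @^-1` [set m]).
  by move=> a b Ha Hb [w [ha hb]]; rewrite -ha -hb.
rewrite (preA k) (preA 0).
rewrite (measure_bigcup P _ _ (fun m _ => mX k m) (t k)).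
rewrite (measure_bigcup P _ _ (fun m _ => mX 0 m) (t 0)).
apply: eq_eseriesr => m _; transitivity ((p m)%:E); first exact: pX.
by symmetry; exact: pX.
Qed.

Lemma Phi_cyl k n A : Phi k @^-1` cyl n A =
  \bigcap_(i in [set` iota k n]) X i @^-1` (A (i - k)%N).
Proof.
apply/seteqP; split => w /=.
- move=> h i; rewrite /= mem_iota => /andP[h1 h2].
  have := h (i - k)%N; rewrite /Phi subnK //; apply; lia.
- move=> h i hi; have := h (i + k)%N; rewrite addnK; apply.
  rewrite /= mem_iota; lia.
Qed.

Lemma mPhi_cyl k n A : measurable (Phi k @^-1` cyl n A).
Proof.
have -> : Phi k @^-1` cyl n A =
    \bigcap_i (if (i < n)%N then X (i + k)%N @^-1` A i else setT).
  apply/seteqP; split => w /=.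
  - by move=> h i _; case: ifP => // hi; exact: h.
  - by move=> h i hi; have := h i Logic.I; rewrite hi.
apply: bigcapT_measurable => i; case: ifP => _ //; exact: mXA.
Qed.

Lemma P_cyl k n A : P (Phi k @^-1` cyl n A) =
  (\prod_(i <- iota 0 n) P (X 0 @^-1` A i))%E.
Proof.
rewrite Phi_cyl (indep (iota k n) (fun i => A (i - k)%N) (iota_uniq _ _)).
rewrite -{1}(addn0 k) iotaDl big_map; apply: eq_bigr => i _.
by rewrite addKn PXA.
Qed.

Lemma triv_pre (f : Omega -> Seq) (F : nat -> set Seq) : trivIset setT F ->
  trivIset setT (fun n => f @^-1` F n).
Proof. by move=> h i j Hi Hj [w [a b]]; apply: h => //; exists (f w). Qed.

Lemma mPhi k B : measurable B -> measurable (Phi k @^-1` B).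
Proof.
apply: (@seq_dynkin (fun B => measurable (Phi k @^-1` B))).
- by rewrite preimage_setT.
- exact: mPhi_cyl.
- by move=> B0 _ h; rewrite -preimage_setC; exact: measurableC.
- by move=> F _ _ h; rewrite preimage_bigcup; exact: bigcupT_measurable.
Qed.

Lemma P_law k B : measurable B -> P (Phi k @^-1` B) = P (Phi 0 @^-1` B).
Proof.
apply: (@seq_dynkin (fun B => P (Phi k @^-1` B) = P (Phi 0 @^-1` B))).
- by rewrite !preimage_setT.
- by move=> n A; rewrite !P_cyl.
- move=> B0 mB h; rewrite -!preimage_setC !probability_setC ?h //; exact: mPhi.
- move=> F mF tF h; rewrite !preimage_bigcup.
  rewrite (measure_bigcup P _ _ (fun n _ => mPhi k _ (mF n)) (triv_pre (Phi k) F tF)).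
  rewrite (measure_bigcup P _ _ (fun n _ => mPhi 0 _ (mF n)) (triv_pre (Phi 0) F tF)).
  by apply: eq_eseriesr => n _; exact: h.
Qed.

Lemma P_cyl2 n m A B :
  P (Phi n @^-1` cyl m B `&` Phi 0 @^-1` cyl n A) =
  (P (Phi n @^-1` cyl m B) * P (Phi 0 @^-1` cyl n A))%E.
Proof.
pose D := fun i => if (i < n)%N then A i else B (i - n)%N.
have -> : Phi n @^-1` cyl m B `&` Phi 0 @^-1` cyl n A =
    Phi 0 @^-1` cyl (n + m) D.
  apply/seteqP; split => w /=.
  - move=> [hB hA] i hi; rewrite /D; case: ifP => hin; first exact: hA.
    have := hB (i - n)%N; rewrite /Phi addn0 subnK; [apply; lia | lia].
  - move=> h; split => i hi.
    + have := h (i + n)%N; rewrite /D /Phi.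
      have -> : (i + n < n)%N = false by lia.
      rewrite addnK addn0; apply; lia.
    + have := h i; rewrite /D hi; apply; lia.
rewrite !P_cyl iotaD big_cat /= [RHS]muleC.
congr (_ * _)%E.
- apply: eq_big_seq => i; rewrite mem_iota /D => /andP[_ hi].
  by rewrite add0n in hi; rewrite hi.
- rewrite add0n -{1}(addn0 n) iotaDl big_map; apply: eq_bigr => i _.
  rewrite /D; have -> : (n + i < n)%N = false by lia.
  by rewrite addKn.
Qed.

Definition eta (w : Omega) : R := O1 R (fun k => X k w).

Lemma etaE w : eta w = Fp R (Phi 0 w).
Proof.
rewrite /Fp /eta; congr (O1 R _); apply/funext => k.
by rewrite /posf /Phi addn0; apply/esym/maxn_idPr; exact: Xpos.
Qed.

Lemma etaT w : O1_shift (eta w) = Fp R (Phi 1 w).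
Proof.
rewrite etaE Fp_shift; congr (Fp R _); apply/funext => k.
by rewrite /Phi addn0 addn1.
Qed.

Lemma mFp (E : set R) : measurable E -> measurable (Fp R @^-1` E : set Seq).
Proof. by move=> mE; have := Fp_meas R measurableT _ mE; rewrite setTI. Qed.

Lemma invariant : T_invariant (@O1_shift R) (distr_of P eta).
Proof.
move=> E mE; rewrite /distr_of.
have -> : eta @^-1` (@O1_shift R @^-1` E) = Phi 1 @^-1` (Fp R @^-1` E).
  by apply/seteqP; split => w /=; rewrite etaT.
have -> : eta @^-1` E = Phi 0 @^-1` (Fp R @^-1` E).
  by apply/seteqP; split => w /=; rewrite etaE.
exact: (P_law 1 _ (mFp _ mE)).
Qed.

Lemma ergodic : T_ergodic (@O1_shift R) (distr_of P eta).
Proof.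
move=> A mA hA.
pose B' : set Seq := Fp R @^-1` A.
have mB' : measurable B' by exact: mFp.
have shB : forall g : Seq, B' (fun k => g k.+1) = B' g.
  move=> g; have := congr1 (fun S : set R => S (Fp R g)) hA.
  by rewrite /B' /preimage /= Fp_shift.
have PhiB : forall n, Phi n @^-1` B' = Phi 0 @^-1` B'.
  elim=> // n IH; rewrite -IH.
  have e : forall w, Phi n.+1 w = (fun k => Phi n w k.+1).
    by move=> w; apply/funext => k; rewrite /Phi addSnnS.
  by apply/seteqP; split => w /=; rewrite e shB.
pose Bw := Phi 0 @^-1` B'.
have mBw : measurable Bw by exact: mPhi.
have step1 : forall n A0, P (Phi 0 @^-1` cyl n A0 `&` Bw) =
    (P (Phi 0 @^-1` cyl n A0) * P Bw)%E.
  move=> n A0; rewrite setIC muleC /Bw -(PhiB n).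
  apply: (@seq_dynkin (fun B => P (Phi n @^-1` B `&` Phi 0 @^-1` cyl n A0) =
     (P (Phi n @^-1` B) * P (Phi 0 @^-1` cyl n A0))%E)) => //.
  - by rewrite preimage_setT setTI probability_setT mul1e.
  - by move=> m A1; exact: P_cyl2.
  - move=> B mB h; rewrite -preimage_setC; apply: indepC => //.
    + exact: mPhi.
    + exact: mPhi_cyl.
  - move=> F mF tF h; rewrite preimage_bigcup; apply: indepU => //.
    + by move=> k; exact: mPhi.
    + exact: mPhi_cyl.
    + exact: triv_pre.
have step2 : forall E, measurable E -> P (Phi 0 @^-1` E `&` Bw) =
    (P (Phi 0 @^-1` E) * P Bw)%E.
  apply: (@seq_dynkin (fun E => P (Phi 0 @^-1` E `&` Bw) =
     (P (Phi 0 @^-1` E) * P Bw)%E)).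
  - by rewrite preimage_setT setTI probability_setT mul1e.
  - exact: step1.
  - move=> B mB h; rewrite -preimage_setC; apply: indepC => //; exact: mPhi.
  - move=> F mF tF h; rewrite preimage_bigcup; apply: indepU => //.
    + by move=> k; exact: mPhi.
    + exact: triv_pre.
have := step2 B' mB'; rewrite setIid -/Bw.
have -> : distr_of P eta A = P Bw.
  rewrite /distr_of; congr (P _); apply/seteqP; split => w /=; by rewrite etaE.
rewrite (@Pfin _ _ _ P _ mBw) -EFinM; case=> hb.
set b := fine (P Bw) in hb *.
have : b * (1 - b) = 0 by rewrite mulrBr mulr1 -hb subrr.
move/eqP; rewrite mulf_eq0 => /orP[/eqP -> | ]; first by left.
by rewrite subr_eq0 => /eqP <-; right.
Qed.
End Main.

Theorem lemma2 (R : realType) (d : measure_display) (Omega : measurableType d)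
  (P : probability Omega R) (X : nat -> Omega -> nat) (p : nat -> R) :
  (forall k m, measurable (X k @^-1` [set m])) ->
  (forall k w, (0 < X k w)%N) ->
  (forall m, 0 <= p m) ->
  ((\sum_(1 <= m <oo) (p m)%:E)%E = 1%E) ->
  (forall k m, P (X k @^-1` [set m]) = (p m)%:E) ->
  mutually_independent P X ->
  let eta := fun w => O1 R (fun k => X k w) in
  T_invariant (@O1_shift R) (distr_of P eta) /\
  T_ergodic (@O1_shift R) (distr_of P eta).
Proof.
move=> mX Xpos _ _ pX ind eta; split.
- exact: (@invariant R d Omega P X p mX pX ind Xpos).
- exact: (@ergodic R d Omega P X p mX pX ind Xpos).
Qed.
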